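(* Let $(\alpha,\beta)\in\Delta_K$ and let $\varepsilon_n=\varepsilon(T^n(\alpha,\beta))$, $n\ge0$. Suppose that the sequence $\{\varepsilon_n\}_{n\ge0}$ is purely periodic with period length $l$. Then the matrix $M_{\varepsilon_0}M_{\varepsilon_1}\cdots M_{\varepsilon_{l-1}}$ is primitive, i.e. some positive power of it has all entries strictly positive.
   Context: Let $K\subset\mathbb{R}$ be a real cubic number field, $N=N_{K/\mathbb{Q}}$ its norm. Fix $r=p/q$ with $p,q$ positive coprime integers and $3\nmid p$. Let $\Delta_K=\{(\alpha,\beta)\in K^2:\ 1,\alpha,\beta \text{ linearly independent over }\mathbb{Q},\ \alpha,\beta>0,\ \alpha+\beta<1\}$ and $Ind=\{(i,j): i,j\in\{0,1,2\},\ i\neq j\}$. Let $\Delta=\{(x,y)\in\mathbb{R}^2: x,y\ge 0,\ x+y\le 1\}$ and $\triangle(1,2)=\{(x,y)\in\Delta: x\ge y\}$, $\triangle(2,1)=\{x\le y\}$, $\triangle(0,1)=\{2x+y-1\le 0\}$, $\triangle(1,0)=\{2x+y-1\ge 0\}$, $\triangle(0,2)=\{x+2y-1\le0\}$, $\triangle(2,0)=\{x+2y-1\ge 0\}$ (all subsets of $\Delta$). Maps $T_{(i,j)}:\triangle(i,j)\to\Delta$: $T_{(1,2)}(x,y)=(\frac{x-y}{1-y},\frac{y}{1-y})$, $T_{(2,1)}(x,y)=(\frac{x}{1-x},\frac{y-x}{1-x})$, $T_{(0,1)}(x,y)=(\frac{x}{1-x},\frac{y}{1-x})$, $T_{(1,0)}(x,y)=(\frac{2x+y-1}{x+y},\frac{y}{x+y})$,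 $T_{(0,2)}(x,y)=(\frac{x}{1-y},\frac{y}{1-y})$, $T_{(2,0)}(x,y)=(\frac{x}{x+y},\frac{x+2y-1}{x+y})$. For $(\alpha,\beta)\in\Delta_K$ put $\gamma=1-\alpha-\beta$ and $v_{\{1,2\}}=\frac{\alpha^r\beta^r}{|N(\alpha)N(\beta)|}$, $v_{\{0,1\}}=\frac{\alpha^r\gamma^r}{|N(\alpha)N(\gamma)|}$, $v_{\{0,2\}}=\frac{\beta^r\gamma^r}{|N(\beta)N(\gamma)|}$; the maximum is attained at a unique pair $\{i_0,j_0\}$. $\varepsilon(\alpha,\beta)$ is the ordered pair $(i,j)\in Ind$ with $\{i,j\}=\{i_0,j_0\}$ and $(\alpha,\beta)\in\triangle(i,j)$, and $T(\alpha,\beta)=T_{\varepsilon(\alpha,\beta)}(\alpha,\beta)$ (a map $\Delta_K\to\Delta_K$). For $(i,j)\in Ind$, $M_{(i,j)}=(m_{k\ell})_{0\le k,\ell\le2}$ with $m_{k\ell}=1$ if $k=\ell$ or $(k,\ell)=(i,j)$, and $0$ otherwise. *)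

(* Defs.v *)
From HB Require Import structures.
From mathcomp Require Import all_boot all_order all_algebra all_field.
From mathcomp Require Import all_classical all_reals all_analysis.
Set Implicit Arguments. Unset Strict Implicit. Unset Printing Implicit Defensive.
Import Order.TTheory GRing.Theory Num.Theory.
Local Open Scope ring_scope.

Section Defs.
Variables (K : fieldExtType rat) (R : realType) (sigma : {rmorphism K -> R}).

Definition normK (x : K) : rat :=
  \det (passmx.mxof (vbasis fullv) (vbasis fullv) (linfun (fun y : K => x * y))).

Definition absN (x : K) : R := ratr `|normK x|.

Definition in_DeltaK (a b : K) : Prop :=
  free [:: 1; a; b] /\ 0 < sigma a /\ 0 < sigma b /\ sigma a + sigma b < 1.

Definition ind := ('I_3 * 'I_3)%type.
Definition i0 : 'I_3 := @Ordinal 3 0 erefl.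
Definition i1 : 'I_3 := @Ordinal 3 1 erefl.
Definition i2 : 'I_3 := @Ordinal 3 2 erefl.

Definition vval (r : R) (x y : K) : R :=
  (sigma x `^ r) * (sigma y `^ r) / (absN x * absN y).

(* epsilon(a,b): the ordered pair (i,j) with {i,j} the pair maximizing v and
   (a,b) in the triangle triangle(i,j).  (Ties do not occur on Delta_K.) *)
Definition eps (r : R) (ab : K * K) : ind :=
  let a := ab.1 in let b := ab.2 in let c := 1 - a - b in
  let x := sigma a in let y := sigma b in
  let v12 := vval r a b in let v01 := vval r a c in let v02 := vval r b c in
  if (v01 <= v12) && (v02 <= v12) then
    (if y <= x then (i1, i2) else (i2, i1))
  else if v02 <= v01 then
    (if 2 * x + y - 1 <= 0 then (i0, i1) else (i1, i0))
  else
    (if x + 2 * y - 1 <= 0 then (i0, i2) else (i2, i0)).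

Definition Tmap (e : ind) (ab : K * K) : K * K :=
  let x := ab.1 in let y := ab.2 in
  match (val e.1, val e.2) with
  | (1, 2)%N => ((x - y) / (1 - y), y / (1 - y))
  | (2, 1)%N => (x / (1 - x), (y - x) / (1 - x))
  | (0, 1)%N => (x / (1 - x), y / (1 - x))
  | (1, 0)%N => ((2 * x + y - 1) / (x + y), y / (x + y))
  | (0, 2)%N => (x / (1 - y), y / (1 - y))
  | (2, 0)%N => (x / (x + y), (x + 2 * y - 1) / (x + y))
  | _ => ab
  end.

Definition Tstep (r : R) (ab : K * K) : K * K := Tmap (eps r ab) ab.

Definition eps_seq (r : R) (ab : K * K) (n : nat) : ind :=
  eps r (iter n (Tstep r) ab).

End Defs.

Definition Mmat (e : ind) : 'M[int]_3 :=
  \matrix_(k < 3, l < 3) ((k == l) || ((k == e.1) && (l == e.2)))%:R.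

Definition primitive_mx (n : nat) (A : 'M[int]_n.+1) : Prop :=
  exists k : nat, (0 < k)%N /\ forall i j, 0 < (A ^+ k) i j.

Definition purely_periodic_len {T : Type} (s : nat -> T) (l : nat) : Prop :=
  (0 < l)%N /\ (forall n, s (n + l)%N = s n) /\
  (forall m, (0 < m < l)%N -> ~ (forall n, s (n + m)%N = s n)).

(* Main.v *)
Require Import Defs.
From HB Require Import structures.
From mathcomp Require Import all_boot all_order all_algebra all_field.
From mathcomp Require Import all_classical all_reals all_analysis.
From mathcomp Require Import ring lra zify.
From Stdlib Require Import Classical.
Import Order.TTheory GRing.Theory Num.Theory.
Local Open Scope ring_scope.

Definition ucoord {K : fieldType} (ab : K * K) (k : 'I_3) : K :=
  match val k with 0%N => 1 - ab.1 - ab.2 | 1%N => ab.1 | _ => ab.2 end.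

Lemma in1P (K : fieldExtType rat) (t : K) : t \in 1%VS -> exists c : rat, t = c *: 1.
Proof. by move/vlineP. Qed.

Lemma noratio (K : fieldExtType rat) (a b : K) (i j : 'I_3) : i != j ->
  free [:: 1; a; b] -> (forall k, ucoord (a, b) k != 0) ->
  ucoord (a, b) i / ucoord (a, b) j \notin 1%VS.
Proof.
move=> ij hfree hnz; apply/negP => hin.
have hin' : ucoord (a, b) j / ucoord (a, b) i \in 1%VS.
  by rewrite -invf_div rpredV.
move: hfree; rewrite !free_cons span_seq1 /= => /and3P [h1 h2 _].
have key : forall x y : 'I_3, x != y -> ucoord (a,b) x / ucoord (a,b) y \in 1%VS ->
   exists c : rat, ucoord (a,b) x = c *: ucoord (a,b) y.
  move=> x y _ /in1P [c hc]; exists c.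
  by rewrite -(divfK (hnz y) (ucoord (a,b) x)) hc -scalerAl mul1r.
have [c1 hc1] := key _ _ ij hin.
have ji : j != i by rewrite eq_sym.
have [c2 hc2] := key _ _ ji hin'.
move: i j ij ji hc1 hc2 {hin hin'} => [[|[|[|?]]] ?] [[|[|[|?]]] ?] //= _ _;
  rewrite /ucoord /= => hc1 hc2.
- apply: (negP h1); have -> : (1 : K) = (c1 + 1) *: a + b.
    by rewrite scalerDl scale1r -hc1; ring.
  by rewrite memvD ?memvZ ?memv_span ?inE ?eqxx ?orbT.
- apply: (negP h1); have -> : (1 : K) = a + (c1 + 1) *: b.
    by rewrite scalerDl scale1r -hc1; ring.
  by rewrite memvD ?memvZ ?memv_span ?inE ?eqxx ?orbT.
- apply: (negP h1); have -> : (1 : K) = (c2 + 1) *: a + b.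
    by rewrite scalerDl scale1r -hc2; ring.
  by rewrite memvD ?memvZ ?memv_span ?inE ?eqxx ?orbT.
- by apply: (negP h2); rewrite hc1 memvZ // memv_line.
- apply: (negP h1); have -> : (1 : K) = a + (c2 + 1) *: b.
    by rewrite scalerDl scale1r -hc2; ring.
  by rewrite memvD ?memvZ ?memv_span ?inE ?eqxx ?orbT.
- by apply: (negP h2); rewrite hc2 memvZ // memv_line.
Qed.

Lemma tmap_step {K : fieldExtType rat} (e : ind) (ab : K * K) : e.1 != e.2 ->
  1 - ucoord ab e.2 != 0 -> forall k,
  ucoord (Tmap e ab) k * (1 - ucoord ab e.2) =
  ucoord ab k - (if k == e.1 then ucoord ab e.2 else 0).
Proof.
case: e => [[[|[|[|i]]] hi] [[|[|[|j]]] hj]] //= _; case: ab => x y;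
  rewrite /ucoord /Tmap /= => hnz [[|[|[|k]]] hk] //=.
all: rewrite /eq_op /=.
all: try field.
all: try done.
all: by rewrite (_ : x + y = 1 - (1 - x - y)) //; ring.
Qed.

Lemma eps_valid {K : fieldExtType rat} {R : realType} (sigma : {rmorphism K -> R})
  (r : R) (ab : K * K) :
  (eps sigma r ab).1 != (eps sigma r ab).2 /\
  sigma (ucoord ab (eps sigma r ab).2) <= sigma (ucoord ab (eps sigma r ab).1).
Proof.
rewrite /eps; case: ab => x y /=.
set v12 := vval _ _ _ _; set v01 := vval _ _ _ _; set v02 := vval _ _ _ _.
case: ifP => _; [|case: ifP => _]; case: ifP => h; rewrite /ucoord /= ?rmorphB ?rmorph1;
  split => //; lra.
Qed.

Lemma mono_gen {R : realType} (T : nat -> R) : (forall n, T n.+1 <= T n) ->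
  forall n d, T (n + d)%N <= T n.
Proof.
move=> hm n; elim => [|d IH]; first by rewrite addn0.
by rewrite addnS; apply: le_trans (hm _) IH.
Qed.

Lemma drain {R : realType} (T : nat -> R) (c : R) (n0 l : nat) : 0 < c -> (0 < l)%N ->
  (forall n, 0 <= T n) -> (forall n, T n.+1 <= T n) ->
  (forall m, T (n0 + m * l).+1 <= T (n0 + m * l)%N - c) -> False.
Proof.
move=> c0 l0 hpos hm hstep.
have mono := mono_gen T hm.
have H : forall m : nat, T (n0 + m * l)%N <= T 0%N - m%:R * c.
  elim => [|m IH].
    by rewrite mul0n addn0 mul0r subr0; have := mono 0%N n0; rewrite add0n.
  have e : (n0 + m.+1 * l = (n0 + m * l).+1 + l.-1)%N.
    by rewrite mulSn; lia.
  rewrite e; apply: le_trans (mono _ _) _.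
  apply: le_trans (hstep m) _.
  rewrite -natr1 mulrDl mul1r; lra.
set m := Num.Def.archi_bound (T 0%N / c).
have hb : T 0%N / c < m%:R by apply: archi_boundP; apply: divr_ge0 => //; apply: ltW.
rewrite ltr_pdivrMr // in hb.
have := H m; have := hpos (n0 + m * l)%N; lra.
Qed.

Lemma eper (e : nat -> ind) (l : nat) (hper : forall n, e (n + l)%N = e n) :
  forall n0 m, e (n0 + m * l)%N = e n0.
Proof.
move=> n0; elim => [|m IH]; first by rewrite mul0n addn0.
by rewrite mulSn (addnC l) addnA hper.
Qed.

Lemma emod (e : nat -> ind) (l : nat) (hper : forall n, e (n + l)%N = e n) :
  forall n, e n = e (n %% l)%N.
Proof.
move=> n; rewrite {1}(divn_eq n l) addnC.
by rewrite (eper _ _ hper).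
Qed.

Lemma intK0 (K : fieldExtType rat) (c : int) : (c%:~R : K) = 0 -> c = 0.
Proof.
move=> h; have : in_alg K (c%:~R) = 0 by rewrite rmorph_int.
by move/eqP; rewrite fmorph_eq0 intr_eq0 => /eqP.
Qed.

Lemma quad_rat (K : fieldExtType rat) (h3 : \dim {:K} = 3%N) (t : K) (c2 c1 c0 : int) :
  ~~ [&& c2 == 0, c1 == 0 & c0 == 0] ->
  c2%:~R * t ^+ 2 + c1%:~R * t + c0%:~R = 0 -> t \in 1%VS.
Proof.
move=> nz ht.
set P : {poly K} := Poly [:: c0%:~R; c1%:~R; c2%:~R].
have Pover : P \is a polyOver 1%VS.
  apply/polyOverP=> i; rewrite coef_Poly.
  by case: i => [|[|[|i]]] /=; rewrite ?rpred_int ?nth_nil ?rpred0.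
have Proot : root P t.
  apply/rootP; rewrite /P !horner_Poly /= mul0r add0r -ht; ring.
have Pnz : P != 0.
  apply/negP=> /eqP P0; move/negP: nz; apply.
  have h0 := congr1 (fun p : {poly K} => p`_0) P0.
  have h1 := congr1 (fun p : {poly K} => p`_1) P0.
  have h2 := congr1 (fun p : {poly K} => p`_2) P0.
  rewrite /= !coef_Poly !coef0 /= in h0 h1 h2.
  by rewrite (intK0 _ _ h0) (intK0 _ _ h1) (intK0 _ _ h2) !eqxx.
have Psz : (size P <= 3)%N by apply: size_Poly.
have hdeg : (adjoin_degree 1%VS t < 3)%N.
  rewrite ltnNge; apply/negP=> hle.
  have := root_small_adjoin_poly Pover (leq_trans Psz hle).
  by rewrite Proot (negbTE Pnz).
have hdvd : (\dim <<1%VS; t>> %| \dim {:K})%N.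
  by apply: field_dimS; apply: subvf.
rewrite dim_Fadjoin dimv1 muln1 h3 in hdvd.
rewrite -adjoin_deg_eq1.
move: hdvd hdeg; case: (adjoin_degree _ _) => [|[|[|]]] //.
Qed.

Section Dyn.
Variables (K : fieldExtType rat) (R : realType) (sigma : {rmorphism K -> R}).
Variables (U : nat -> 'I_3 -> K) (e : nat -> ind).
Hypothesis hU : forall n k, U n.+1 k = U n k - (if k == (e n).1 then U n (e n).2 else 0).
Hypothesis hpos : forall n k, 0 <= sigma (U n k).

Lemma Udec n k : sigma (U n.+1 k) <= sigma (U n k).
Proof.
rewrite hU rmorphB; case: ifP => _; rewrite ?rmorph0 ?subr0 //.
by rewrite lerBlDr lerDl hpos.
Qed.

Lemma Umono k n d : sigma (U (n + d)%N k) <= sigma (U n k).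
Proof. exact: (mono_gen (fun n => sigma (U n k)) (fun n => Udec n k)). Qed.

Definition Ttot n := \sum_(k < 3) sigma (U n k).

Lemma Ttot_step n : Ttot n.+1 = Ttot n - sigma (U n (e n).2).
Proof.
rewrite /Ttot; under eq_bigr do rewrite hU rmorphB; rewrite sumrB.
congr (_ - _); rewrite (bigD1 (e n).1) //= eqxx big1 ?addr0 // => k /negbTE ->.
by rewrite rmorph0.
Qed.

Lemma Ttot_ge0 n : 0 <= Ttot n.
Proof. by apply: sumr_ge0 => k _; apply: hpos. Qed.

Variables (l : nat) (hl : (0 < l)%N) (hper : forall n, e (n + l)%N = e n).

Lemma small n0 j : (e n0).2 = j -> forall d, 0 < d -> exists n, sigma (U n j) < d.
Proof.
move=> hj d d0; apply: NNPP => hno.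
have hge : forall n, d <= sigma (U n j).
  move=> n; rewrite leNgt; apply/negP => h; apply: hno; by exists n.
apply: (drain Ttot d n0 l d0 hl Ttot_ge0) => [n|m].
  by rewrite Ttot_step lerBlDr lerDl hpos.
rewrite Ttot_step (eper _ _ hper) hj; have := hge (n0 + m * l)%N; lra.
Qed.

Lemma constU v : (forall n, (e n).1 != v) -> forall n, U n v = U 0%N v.
Proof.
move=> hv; elim => [|n IH] //; rewrite hU eq_sym (negbTE (hv n)) subr0 //.
Qed.

Lemma C1 v : (forall n, (e n).1 != v) -> (exists n, (e n).2 = v) ->
  0 < sigma (U 0%N v) -> False.
Proof.
move=> hv [n0 hn0] hp; have [n hn] := small n0 v hn0 _ hp.
by rewrite (constU v hv) ltxx in hn.
Qed.


Hypothesis hne : forall n, (e n).1 != (e n).2.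
Hypothesis hdim : \dim {:K} = 3%N.
Hypothesis hU0 : forall k, 0 < sigma (U 0%N k).
Hypothesis hnorat : forall i j, i != j -> U 0%N i / U 0%N j \notin 1%VS.

Section Block.
Variables (i j : 'I_3).
Hypothesis ij : i != j.
Hypothesis hcl : forall n, ((e n).1 == i) || ((e n).1 == j) ->
   ((e n).2 == i) || ((e n).2 == j).

Definition blk (f : ind) (x y : K) : K * K :=
  if f == (i, j) then (x - y, y) else if f == (j, i) then (x, y - x) else (x, y).

Lemma bstep n : (U n.+1 i, U n.+1 j) = blk (e n) (U n i) (U n j).
Proof.
have h1 := hU n i; have h2 := hU n j; have hc := hcl n; have hn := hne n.
rewrite /blk; case: (e n) h1 h2 hc hn => p q /= -> -> hc hn.
have ji : j != i by rewrite eq_sym.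
case: (eqVneq p i) => [ep|pi].
  subst p; have eqq : q = j.
    by move: hc; rewrite eqxx /= => /(_ isT); rewrite eq_sym (negbTE hn) /= => /eqP.
  by subst q; rewrite eqxx eq_sym (negbTE ij) subr0.
case: (eqVneq p j) => [ep|pj].
  subst p; have eqq : q = i.
    by move: hc; rewrite eqxx orbT => /(_ isT); rewrite (eq_sym q j) (negbTE hn) orbF => /eqP.
  by subst q; rewrite xpair_eqE (negbTE ji) /= eqxx /= subr0.
by rewrite !xpair_eqE (negbTE pi) (negbTE pj) /= !subr0.
Qed.

Lemma blk_det f x1 y1 x2 y2 :
  (blk f x1 y1).1 * (blk f x2 y2).2 - (blk f x1 y1).2 * (blk f x2 y2).1 =
  x1 * y2 - y1 * x2.
Proof. by rewrite /blk; case: ifP => _; [|case: ifP => _]; rewrite /=; ring. Qed.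


Definition Dd n := U n i * U (n + l)%N j - U n j * U (n + l)%N i.

Lemma Dd_const n : Dd n = Dd 0%N.
Proof.
elim: n => [//|n IH]; rewrite -IH /Dd addSn.
have h1 := bstep n; have h2 := bstep (n + l)%N; rewrite hper in h2.
have e1 := congr1 fst h1; have e2 := congr1 snd h1.
have e3 := congr1 fst h2; have e4 := congr1 snd h2.
by rewrite /= in e1 e2 e3 e4; rewrite e1 e2 e3 e4 blk_det.
Qed.

Lemma fwd n : exists p q r s : int,
  U n i = p%:~R * U 0%N i + q%:~R * U 0%N j /\ U n j = r%:~R * U 0%N i + s%:~R * U 0%N j.
Proof.
elim: n => [|n [p [q [r [s [h1 h2]]]]]].
  by exists 1, 0, 0, 1; split; rewrite /= ?mul1r ?mul0r ?addr0 ?add0r.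
have := bstep n; rewrite /blk; case: ifP => _; [|case: ifP => _]; case => e1 e2.
- exists (p - r), (q - s), r, s; rewrite e1 e2 h1 h2 !intrB; split; ring.
- exists p, q, (r - p), (s - q); rewrite e1 e2 h1 h2 !intrB; split; ring.
- by exists p, q, r, s; rewrite e1 e2.
Qed.

Lemma bwd n : exists p q r s : int,
  U 0%N i = p%:~R * U n i + q%:~R * U n j /\ U 0%N j = r%:~R * U n i + s%:~R * U n j.
Proof.
elim: n => [|n [p [q [r [s [h1 h2]]]]]].
  by exists 1, 0, 0, 1; split; rewrite /= ?mul1r ?mul0r ?addr0 ?add0r.
have := bstep n; rewrite /blk; case: ifP => _; [|case: ifP => _]; case => e1 e2.
- have E1 : U n i = U n.+1 i + U n.+1 j by rewrite e1 e2; ring.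
  have E2 : U n j = U n.+1 j by rewrite e2.
  rewrite E1 E2 in h1 h2.
  exists p, (p + q), r, (r + s); rewrite h1 h2 !intrD; split; ring.
- have E1 : U n j = U n.+1 j + U n.+1 i by rewrite e1 e2; ring.
  have E2 : U n i = U n.+1 i by rewrite e1.
  rewrite E1 E2 in h1 h2.
  exists (p + q), q, (r + s), s; rewrite h1 h2 !intrD; split; ring.
- by exists p, q, r, s; rewrite e1 e2.
Qed.

Lemma C2main : (exists n, e n = (i, j)) -> False.
Proof.
move=> [n1 hn1].
have hj : (e n1).2 = j by rewrite hn1.
set x := U 0%N i; set y := U 0%N j.
have x0 : 0 < sigma x := hU0 i; have y0 : 0 < sigma y := hU0 j.
have D0 : Dd 0%N = 0.
  apply/eqP; rewrite -(fmorph_eq0 sigma); apply/negP => /negP hD.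
  set z := sigma (Dd 0%N).
  have h2x : 0 < 2 * sigma x by lra.
  have zp : 0 < `|z| by rewrite normr_gt0.
  have [n hn] := small n1 j hj (`|z| / (2 * sigma x)) (divr_gt0 zp h2x).
  have hb : `|z| <= sigma x * sigma (U n j).
    rewrite /z -(Dd_const n) /Dd rmorphB !rmorphM.
    have a1 := Umono i n l; have a2 := Umono j n l.
    have a3 := Umono i 0 n; rewrite add0n in a3.
    have b1 := hpos (n + l)%N i; have b2 := hpos (n + l)%N j.
    have b3 := hpos n i; have b4 := hpos n j.
    rewrite ler_norml; apply/andP; split; nra.
  have : sigma x * sigma (U n j) < sigma x * (`|z| / (2 * sigma x)).
    by rewrite ltr_pM2l.
  have -> : sigma x * (`|z| / (2 * sigma x)) = `|z| / 2.
    by field; rewrite ?lt0r_neq0 //.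
  lra.
have [p [q [r [s [f1 f2]]]]] := fwd l.
move: D0; rewrite /Dd add0n f1 f2 -/x -/y => D0.
have ynz : y != 0 by rewrite -(fmorph_eq0 sigma) lt0r_neq0.
case: (boolP [&& r == 0, s - p == 0 & - q == 0]) => hz.
  move/and3P: hz => [/eqP r0 /eqP sp /eqP q0].
  have qq : q = 0 by rewrite -[q]opprK q0.
  have ss : s = p by apply/eqP; rewrite -subr_eq0 sp.
  rewrite r0 ss qq in f1 f2.
  have {}f1 : U l i = p%:~R * x.
    by rewrite f1 /x; ring.
  have {}f2 : U l j = p%:~R * y by rewrite f2 /y; ring.
  have hpl : sigma (U l i) = p%:~R * sigma x by rewrite f1 rmorphM rmorph_int.
  have hp0 : 0 <= p by rewrite -(ler0z R) -(pmulr_lge0 _ x0) -hpl hpos.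
  have hp1 : p <= 1.
    rewrite -(lerz1 R) -(ler_pM2r x0) mul1r -hpl.
    by have := Umono i 0 l; rewrite add0n.
  have : (p = 0) \/ (p = 1) by lia.
  case => pv; rewrite pv in f1 f2.
    have [p' [q' [r' [s' [g1 _]]]]] := bwd l.
    have x00 : U 0%N i = 0 by rewrite g1 f1 f2 /x /y; ring.
    by move: x0; rewrite /x x00 rmorph0 ltxx.
  have {}f1 : U l i = x by rewrite f1 /x; ring.
  have {}f2 : U l j = y by rewrite f2 /y; ring.
  have per : forall n, U (n + l)%N i = U n i /\ U (n + l)%N j = U n j.
    elim => [|n [IH1 IH2]]; first by rewrite add0n f1 f2.
    have h1 := bstep n; have h2 := bstep (n + l)%N; rewrite hper IH1 IH2 -h1 in h2.
    by case: h2; rewrite addSn.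
  have perm : forall m, U (m * l)%N j = y.
    elim => [|m IH]; first by rewrite mul0n.
    by rewrite mulSn addnC (per _).2.
  have [n hn] := small n1 j hj (sigma y) y0.
  have : sigma (U (n * l)%N j) <= sigma (U n j).
    have -> : (n * l = n + (n * l - n))%N by rewrite subnKC // leq_pmulr.
    exact: Umono.
  rewrite perm; lra.
have hq : (r%:~R * (x / y) ^+ 2 + (s - p)%:~R * (x / y) + (- q)%:~R : K) = 0.
  rewrite intrB intrN.
  have -> : (r%:~R * (x / y) ^+ 2 + (s%:~R - p%:~R) * (x / y) + - q%:~R : K) =
     (x * (r%:~R * x + s%:~R * y) - y * (p%:~R * x + q%:~R * y)) / (y ^+ 2).
    by field.
  by rewrite D0 mul0r.
have := quad_rat K hdim (x / y) _ _ _ hz hq.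
by apply/negP; apply: hnorat.
Qed.

End Block.

End Dyn.

Lemma all3 (v : 'I_3) : [\/ v = i0, v = i1 | v = i2].
Proof. by case: v => [[|[|[|v]]] hv] //=; [constructor 1|constructor 2|constructor 3]; apply: val_inj. Qed.

Lemma exists3 (P : pred 'I_3) : [exists w, P w] = [|| P i0, P i1 | P i2].
Proof.
apply/existsP/idP => [[w]|]; first by case: (all3 w) => -> ->; rewrite ?orbT.
by case/or3P => h; eexists; exact: h.
all: by [].
Qed.

Lemma comb9 (b00 b01 b02 b10 b11 b12 b20 b21 b22 : bool) :
  (~~ b00 && (~~ b11 && ~~ b22)) ->
  ((b00 || (b10 || b20)) ==> (b00 || (b01 || b02))) ->
  ((b01 || (b11 || b21)) ==> (b10 || (b11 || b12))) ->
  ((b02 || (b12 || b22)) ==> (b20 || (b21 || b22))) ->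
  ((b01 && b10) ==> (b02 || b12)) ->
  ((b02 && b20) ==> (b01 || b21)) ->
  ((b10 && b01) ==> (b12 || b02)) ->
  ((b12 && b21) ==> (b10 || b20)) ->
  ((b20 && b02) ==> (b21 || b01)) ->
  ((b21 && b12) ==> (b20 || b10)) ->
  (b00 || (b01 || (b02 || (b10 || (b11 || (b12 || (b20 || (b21 || b22)))))))) ->
  (b01 || ((b00 && b01) || ((b01 && b11) || (b02 && b21)))) && (b02 || ((b00 && b02) || ((b01 && b12) || (b02 && b22)))) && (b10 || ((b10 && b00) || ((b11 && b10) || (b12 && b20)))) && (b12 || ((b10 && b02) || ((b11 && b12) || (b12 && b22)))) && (b20 || ((b20 && b00) || ((b21 && b10) || (b22 && b20)))) && (b21 || ((b20 && b01) || ((b21 && b11) || (b22 && b21)))).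
Proof. by case: b00; case: b01; case: b02; case: b10; case: b11; case: b12; case: b20; case: b21; case: b22; rewrite /=; do ?case. Qed.

Lemma comb (b : 'I_3 -> 'I_3 -> bool) :
  (forall v, ~~ b v v) ->
  (forall v, [|| b i0 v, b i1 v | b i2 v] -> [|| b v i0, b v i1 | b v i2]) ->
  (forall i j k, i != j -> j != k -> i != k -> b i j && b j i -> b i k || b j k) ->
  (exists r0 s0, b r0 s0) ->
  forall r s, [|| r == s, b r s | [exists w, b r w && b w s]].
Proof.
move=> hd h1 h2 [r0 [s0 hrs]] r s; rewrite exists3.
have ne : [|| b i0 i0, b i0 i1, b i0 i2, b i1 i0, b i1 i1, b i1 i2, b i2 i0, b i2 i1 | b i2 i2].
  by move: hrs; case: (all3 r0) => ->; case: (all3 s0) => -> ->; rewrite ?orbT.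
have := comb9 (b i0 i0) (b i0 i1) (b i0 i2) (b i1 i0) (b i1 i1) (b i1 i2) (b i2 i0) (b i2 i1) (b i2 i2) (introT and3P (And3 (hd i0) (hd i1) (hd i2)))
  (introT implyP (h1 i0)) (introT implyP (h1 i1)) (introT implyP (h1 i2))
  (introT implyP (h2 i0 i1 i2 isT isT isT)) (introT implyP (h2 i0 i2 i1 isT isT isT))
  (introT implyP (h2 i1 i0 i2 isT isT isT)) (introT implyP (h2 i1 i2 i0 isT isT isT))
  (introT implyP (h2 i2 i0 i1 isT isT isT)) (introT implyP (h2 i2 i1 i0 isT isT isT)) ne.
case/andP => /andP [/andP [/andP [/andP [c01 c02] c10] c12] c20] c21.
case: (all3 r) => ->; case: (all3 s) => ->; rewrite ?eqxx //=.
all: by [].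
Qed.

Lemma mul_ge {A B : 'M[int]_3} x y w : (forall a b, 0 <= A a b) -> (forall a b, 0 <= B a b) ->
  A x w * B w y <= (A * B) x y.
Proof.
move=> hA hB; rewrite -mulmxE mxE (bigD1 w) //= lerDl.
by apply: sumr_ge0 => c _; apply: mulr_ge0.
Qed.

Lemma Mmat_ge0 f a b : 0 <= Mmat f a b.
Proof. by rewrite /Mmat mxE ler0n. Qed.

Lemma prod_props (e : nat -> ind) n :
  let P := \prod_(k < n) Mmat (e k) in
  [/\ forall x y, 0 <= P x y, forall x, 1 <= P x x &
      forall k, (k < n)%N -> 1 <= P (e k).1 (e k).2].
Proof.
elim: n => [|n [h1 h2 h3]] /=.
  rewrite big_ord0; split => [x y|x|k] //; rewrite mxE ?ler0n //.
  by rewrite eqxx.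
rewrite big_ord_recr /=.
set P := \prod_(k < n) _.
set M := Mmat (e n).
have hM := Mmat_ge0 (e n).
have Mdiag : forall x, M x x = 1 by move=> x; rewrite /M /Mmat mxE eqxx.
split.
- move=> x y; rewrite -mulmxE mxE; apply: sumr_ge0 => c _; exact: mulr_ge0.
- move=> x; apply: le_trans _ (mul_ge x x x h1 hM); rewrite Mdiag mulr1; exact: h2.
- move=> k; rewrite ltnS leq_eqVlt => /orP [/eqP ->|hk].
    apply: le_trans _ (mul_ge (e n).1 (e n).2 (e n).1 h1 hM).
    rewrite /M /Mmat mxE !eqxx andbT orbT mulr1; exact: h2.
  apply: le_trans _ (mul_ge (e k).1 (e k).2 (e k).2 h1 hM); rewrite Mdiag mulr1; exact: h3.
Qed.

Lemma prim_of (e : nat -> ind) l :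
  (forall x y, [|| x == y, [exists k : 'I_l, e k == (x, y)] |
     [exists w, [exists k : 'I_l, e k == (x, w)] && [exists k : 'I_l, e k == (w, y)]]]) ->
  primitive_mx (\prod_(k < l) Mmat (e k)).
Proof.
move=> hc; have [h1 h2 h3] := prod_props e l.
set A := \prod_(k < l) _ in h1 h2 h3 *.
have hedge : forall x y, [exists k : 'I_l, e k == (x, y)] -> 1 <= A x y.
  by move=> x y /existsP [k /eqP hk]; have := h3 k (ltn_ord k); rewrite hk.
exists 2%N; split => // x y; rewrite expr2.
have pos : forall a b, 1 <= A a b -> 0 < A a b.
  by move=> a b h; apply: lt_le_trans h; apply: ltr01.
case/or3P: (hc x y) => [/eqP <-|/hedge h|/existsP [w /andP [/hedge ha /hedge hb]]].
- apply: lt_le_trans (mul_ge x x x h1 h1).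
  by apply: mulr_gt0; apply: pos.
- apply: lt_le_trans (mul_ge x y y h1 h1).
  by apply: mulr_gt0; apply: pos.
- apply: lt_le_trans (mul_ge x y w h1 h1).
  by apply: mulr_gt0; apply: pos.
Qed.

Fixpoint scal {K : fieldType} (st : nat -> K * K) (e : nat -> ind) (n : nat) : K :=
  match n with
  | 0%N => 1
  | n'.+1 => scal st e n' * (1 - ucoord (st n') (e n').2)
  end.

Lemma ucoord_sum {K : fieldType} (ab : K * K) :
  ucoord ab i0 + ucoord ab i1 + ucoord ab i2 = 1.
Proof. by rewrite /ucoord /=; ring. Qed.

Lemma pair_le {R : realType} (f : 'I_3 -> R) (i j : 'I_3) : i != j ->
  (forall k, 0 <= f k) -> f i + f j <= f i0 + f i1 + f i2.
Proof.
move=> ij hf; have h0 := hf i0; have h1 := hf i1; have h2 := hf i2.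
move: ij; case: (all3 i) => ->; case: (all3 j) => -> //= _; lra.
Qed.

Lemma construct {K : fieldExtType rat} {R : realType} (sigma : {rmorphism K -> R})
  (r : R) (a b : K) (hab : in_DeltaK sigma a b) :
  let e := eps_seq sigma r (a, b) in
  exists U : nat -> 'I_3 -> K,
  [/\ forall n k, U n.+1 k = U n k - (if k == (e n).1 then U n (e n).2 else 0),
      forall n k, 0 <= sigma (U n k) & forall k, U 0%N k = ucoord (a, b) k].
Proof.
move=> e.
set st := fun n => iter n (Tstep sigma r) (a, b).
have est : forall n, e n = eps sigma r (st n) by [].
have stS : forall n, st n.+1 = Tmap (e n) (st n) by move=> n; rewrite /st iterS.
have [_ [ha [hb hab1]]] := hab.
have inv : forall n, 0 < sigma (scal st e n) /\ forall k, 0 <= sigma (ucoord (st n) k).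
  elim => [|n [IH1 IH2]].
    split; first by rewrite /= rmorph1 ltr01.
    move=> k; rewrite /st /= /ucoord /=; case: (val k) => [|[|n]] /=.
    - rewrite !rmorphB rmorph1; lra.
    - exact: ltW.
    - exact: ltW.
  have [hne hval] := eps_valid sigma r (st n); rewrite -est in hne hval.
  set u := ucoord (st n).
  have hsum : sigma (u i0) + sigma (u i1) + sigma (u i2) = 1.
    by rewrite -!rmorphD ucoord_sum rmorph1.
  have hpl := pair_le (fun k => sigma (u k)) _ _ hne IH2; rewrite /= hsum in hpl.
  have hj : 0 < sigma (1 - u (e n).2) by rewrite rmorphB rmorph1; lra.
  have hnz : 1 - u (e n).2 != 0 by rewrite -(fmorph_eq0 sigma) lt0r_neq0.
  have hts := tmap_step (e n) (st n) hne hnz.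
  split; first by rewrite /= rmorphM mulr_gt0.
  move=> k; have := hts k; rewrite -stS => hk.
  have -> : ucoord (st n.+1) k = (u k - (if k == (e n).1 then u (e n).2 else 0)) / (1 - u (e n).2).
    by rewrite -hk mulfK.
  rewrite fmorph_div; apply: divr_ge0; last by apply: ltW.
  case: ifP => [/eqP ->|_]; rewrite rmorphB ?rmorph0 ?subr0 ?subr_ge0 //.
exists (fun n k => scal st e n * ucoord (st n) k); split.
- move=> n k /=.
  have [hne hval] := eps_valid sigma r (st n); rewrite -est in hne hval.
  have [h1 h2] := inv n.
  have hpl := pair_le (fun k => sigma (ucoord (st n) k)) _ _ hne h2.
  rewrite /= -!rmorphD ucoord_sum rmorph1 in hpl.
  have hnz : 1 - ucoord (st n) (e n).2 != 0.
    by rewrite -(fmorph_eq0 sigma) rmorphB rmorph1 lt0r_neq0 //; lra.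
  have := tmap_step (e n) (st n) hne hnz k; rewrite -stS => hk.
  rewrite (_ : ucoord (Tstep sigma r (st n)) k = ucoord (st n.+1) k) // -mulrA [(1 - _) * _]mulrC hk; case: ifP => _; ring.
- by move=> n k; have [h1 h2] := inv n; rewrite rmorphM mulr_ge0 // ltW.
- by move=> k; rewrite /= mul1r.
Qed.

Lemma three (i j k y : 'I_3) : i != j -> j != k -> i != k -> [|| y == i, y == j | y == k].
Proof.
by case: (all3 i) => ->; case: (all3 j) => ->; case: (all3 k) => ->; case: (all3 y) => ->.
Qed.

Theorem theorem3p7 (K : fieldExtType rat) (R : realType)
  (sigma : {rmorphism K -> R}) (hdim : \dim {:K} = 3%N)
  (p q : nat) (hp : (0 < p)%N) (hq : (0 < q)%N) (hcop : coprime p q)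
  (h3 : ~~ (3 %| p)%N)
  (a b : K) (hab : in_DeltaK sigma a b) (l : nat)
  (hper : purely_periodic_len
            (eps_seq sigma ((p%:R : R) / (q%:R : R)) (a, b)) l) :
  primitive_mx (\prod_(k < l) Mmat (eps_seq sigma ((p%:R : R) / (q%:R : R)) (a, b) k)).
Proof.
set r := (p%:R : R) / (q%:R : R) in hper *.
set e := eps_seq sigma r (a, b) in hper *.
case: hper => hl [hpe _].
have [U [hU hpos hU0']] := construct sigma r a b hab.
have hne : forall n, (e n).1 != (e n).2 by move=> n; have [] := eps_valid sigma r (iter n (Tstep sigma r) (a, b)).
have [hfree [ha [hb hab1]]] := hab.
have hU0 : forall k, 0 < sigma (U 0%N k).
  move=> k; rewrite hU0' /ucoord; case: (val k) => [|[|n]] //=.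
  by rewrite !rmorphB rmorph1; lra.
have hnorat : forall i j, i != j -> U 0%N i / U 0%N j \notin 1%VS.
  move=> i j ij; rewrite !hU0'; apply: noratio => // k.
  by rewrite -hU0' -(fmorph_eq0 sigma) lt0r_neq0.
have emd := emod e l hpe.
have hml : forall n, (n %% l < l)%N by move=> n; rewrite ltn_pmod.
apply: prim_of.
apply: (comb (fun x y => [exists k : 'I_l, e k == (x, y)])).
- move=> v; apply/negP => /existsP [k /eqP hk]; have := hne k; by rewrite hk eqxx.
- move=> v hin; apply: contraT => hno; exfalso.
  apply: (@C1 _ _ sigma U e hU hpos l hl hpe v _ _ (hU0 v)).
  + move=> n; rewrite emd; apply/negP => /eqP h; move/negP: hno; apply.
    have hb' : [exists k : 'I_l, e k == (v, (e (n %% l)%N).2)].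
      apply/existsP; exists (Ordinal (hml n)) => /=.
      by rewrite -h; case: (e (n %% l)%N).
    by case: (all3 (e (n %% l)%N).2) hb' => -> ->; rewrite ?orbT.
  + by case/or3P: hin => /existsP [k /eqP hk]; exists k; rewrite hk.
- move=> i j k ij jk ik /andP [hij hji]; apply: contraT; rewrite negb_or => /andP [nik njk].
  exfalso; apply: (@C2main _ _ sigma U e hU hpos l hl hpe hne hdim hU0 hnorat i j ij).
  + move=> n; rewrite emd; case E: (e (n %% l)%N) => [x y] /= hx.
    have hxy : x != y by have := hne (n %% l)%N; rewrite E.
    case/or3P: (three i j k y ij jk ik) => [->|->|/eqP yk]; rewrite ?orbT //.
    subst y; exfalso; case/orP: hx => /eqP hx; subst x.
      by move/negP: nik; apply; apply/existsP; exists (Ordinal (hml n)); rewrite /= E.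
    by move/negP: njk; apply; apply/existsP; exists (Ordinal (hml n)); rewrite /= E.
  + by case/existsP: hij => n /eqP hn; exists n.
- exists (e 0%N).1, (e 0%N).2; apply/existsP; exists (Ordinal hl) => /=.
  by case: (e 0%N).
Qed.
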